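(* Fix a time $t\ge0$, a multiplier $\lambda\ge0$, and a differentiable parametric policy $\pi_\theta(a\mid x)$ with $\pi_\theta(a\mid x)>0$ implying $\pi_0(a\mid x)>0$ (common support), and assume $L$ and $C$ are conditionally independent given $(x,a)$. Let $c(x,a)$ be a known cost function, $\hat\pi_0,\hat G,\hat S$ fixed (not depending on $\mathcal{D}$) models with $\hat G(t\mid x,a)>0$ and $\hat\pi_0(a\mid x)>0$ whenever $\pi_\theta(a\mid x)>0$, and $\hat w'(x,a)=\pi_\theta(a\mid x)/\hat\pi_0(a\mid x)$. Define $$\widehat{\nabla_\theta L}_{\mathrm{IPCW\text{-}IPS}}=\frac1n\sum_{i=1}^n \hat w'(x_i,a_i)\Big(\frac{\mathbb{I}\{T_i>t\}}{\hat G(t\mid x_i,a_i)}-\lambda c(x_i,a_i)\Big)\nabla_\theta\log\pi_\theta(a_i\mid x_i),$$ $$\widehat{\nabla_\theta L}_{\mathrm{IPCW\text{-}DR}}=\frac1n\sum_{i=1}^n\Big(\hat w'(x_i,a_i)\Big(\frac{\mathbb{I}\{T_i>t\}}{\hat G(t\mid x_i,a_i)}-\hat S(x_i,a_i,t)\Big)\nabla_\theta\log\pi_\theta(a_i\mid x_i)+\sum_{a\in\mathcal{A}}\pi_\theta(a\mid x_i)\big(\hat S(x_i,a,t)-\lambda c(x_i,a)\big)\nabla_\theta\log\pi_\theta(a\mid x_i)\Big).$$ Let $R_\lambda(x,a,t)=S(x,a,t)-\lambda c(x,a)$ and $g(\theta)=\mathbb{E}_{p(x)\pi_\theta(a\mid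 x)}[R_\lambda(x,a,t)\nabla_\theta\log\pi_\theta(a\mid x)]$ (the Lagrangian policy gradient $\nabla_\theta L(\pi_\theta,t,\lambda)$). Suppose $\hat G(t\mid x,a)=G(t\mid x,a)$ for all $x,a$. Then $\mathbb{E}_{\mathcal{D}}[\widehat{\nabla_\theta L}_{\mathrm{IPCW\text{-}IPS}}]=g(\theta)$ if $\hat\pi_0=\pi_0$, and $\mathbb{E}_{\mathcal{D}}[\widehat{\nabla_\theta L}_{\mathrm{IPCW\text{-}DR}}]=g(\theta)$ if either $\hat\pi_0=\pi_0$ or $\hat S(x,a,t)=S(x,a,t)$ for all $x,a$.
   Context: Let $\mathcal{X}$ be a context space and $\mathcal{A}$ a finite action set. A policy $\pi(a\mid x)$ is a conditional distribution over $\mathcal{A}$ given $x$. The logged data $\mathcal{D}=\{(x_i,a_i,T_i,r_i)\}_{i=1}^n$ consists of $n$ i.i.d. draws generated by $(x,a,L,C)\sim p(x)\pi_0(a\mid x)p(L,C\mid x,a)$ for a logging policy $\pi_0$, where $L\ge0$ is the latent survival time, $C\ge0$ the censoring time, and only $T=\min\{L,C\}$ and $r=\mathbb{I}\{L\le C\}$ are observed. Define $S(x,a,t)=P(L>t\mid x,a)$, $G(t\mid x,a)=P(C>t\mid x,a)$, $V(\pi,t)=\mathbb{E}_{p(x)\pi(a\mid x)}[S(x,a,t)]$, the expected cost $C(\pi)=\mathbb{E}_{p(x)\pi(a\mid x)}[c(x,a)]$, and for a budget $B$ the Lagrangian $L(\pi_\theta,t,\lambda)=V(\pi_\theta,t)-\lambda(C(\pi_\theta)-B)$.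 *)

(* Defs.v *)
From HB Require Import structures.
From mathcomp Require Import all_boot all_order all_algebra.
From mathcomp Require Import all_classical all_reals all_analysis.
From mathcomp Require Import measurable_realfun.
Set Implicit Arguments. Unset Strict Implicit. Unset Printing Implicit Defensive.
Import Order.TTheory GRing.Theory Num.Theory.
Import numFieldNormedType.Exports.
Local Open Scope classical_set_scope.
Local Open Scope ring_scope.

Section Defs.
Context {R : realType} {dX : measure_display} {X : measurableType dX}
  {A : finType} {m : nat}.

(* PLC x a : joint law p(L,C | x,a) of (latent survival time, censoring time) *)

Definition surv (PLC : X -> A -> probability (R * R)%type R) (x : X) (a : A) (t : R) : R :=
  fine (PLC x a ([set l | t < l] `*` [set: R])).

Definition cens (PLC : X -> A -> probability (R * R)%type R) (t : R) (x : X) (a : A) : R :=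
  fine (PLC x a ([set: R] `*` [set c | t < c])).

Definition dlogpi (pol : 'rV[R]_m -> X -> A -> R) (th : 'rV[R]_m) (x : X) (a : A)
  (j : 'I_m) : R :=
  'D_(delta_mx 0 j) (fun th' => ln (pol th' x a)) th.

Definition ips_term (pol : 'rV[R]_m -> X -> A -> R) (pi0h : X -> A -> R)
  (Gh : R -> X -> A -> R) (c : X -> A -> R) (lam t : R) (th : 'rV[R]_m)
  (j : 'I_m) (x : X) (a : A) (T : R) : R :=
  pol th x a / pi0h x a * ((if t < T then 1 else 0) / Gh t x a - lam * c x a) * dlogpi pol th x a j.

Definition dr_term (pol : 'rV[R]_m -> X -> A -> R) (pi0h : X -> A -> R)
  (Gh : R -> X -> A -> R) (Sh : X -> A -> R -> R) (c : X -> A -> R) (lam t : R)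
  (th : 'rV[R]_m) (j : 'I_m) (x : X) (a : A) (T : R) : R :=
  pol th x a / pi0h x a * ((if t < T then 1 else 0) / Gh t x a - Sh x a t) * dlogpi pol th x a j
  + \sum_(b : A) pol th x b * (Sh x b t - lam * c x b) * dlogpi pol th x b j.

Definition lag_grad (px : probability X R) (PLC : X -> A -> probability (R * R)%type R)
  (pol : 'rV[R]_m -> X -> A -> R) (c : X -> A -> R) (lam t : R) (th : 'rV[R]_m)
  (j : 'I_m) : \bar R :=
  (\int[px]_x (\sum_(a : A) pol th x a * (surv PLC x a t - lam * c x a)
                 * dlogpi pol th x a j)%:E)%E.

(* the dataset: n random samples (x_i, a_i, L_i, C_i) on a probability space;
   observed T_i = min(L_i, C_i), r_i = 1{L_i <= C_i}. *)
Definition sample_event {d : measure_display} {Om : measurableType d}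
  (Xs : Om -> X) (As : Om -> A) (Ls Cs : Om -> R)
  (B : set X) (D : set A) (E F : set R) : set Om :=
  [set w | B (Xs w) /\ D (As w) /\ E (Ls w) /\ F (Cs w)].

Definition samples_indep {d : measure_display} {Om : measurableType d}
  (P : probability Om R) (n : nat)
  (Xs : 'I_n -> Om -> X) (As : 'I_n -> Om -> A) (Ls Cs : 'I_n -> Om -> R) : Prop :=
  forall (B : 'I_n -> set X) (D : 'I_n -> set A) (E F : 'I_n -> set R),
    (forall i, measurable (B i)) -> (forall i, measurable (E i)) ->
    (forall i, measurable (F i)) ->
    P (\bigcap_(i in [set: 'I_n]) sample_event (Xs i) (As i) (Ls i) (Cs i) (B i) (D i) (E i) (F i))
    = (\prod_(i < n) P (sample_event (Xs i) (As i) (Ls i) (Cs i) (B i) (D i) (E i) (F i)))%E.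

Definition sample_law {d : measure_display} {Om : measurableType d}
  (P : probability Om R) (px : probability X R) (pi0 : X -> A -> R)
  (PLC : X -> A -> probability (R * R)%type R)
  (Xs : Om -> X) (As : Om -> A) (Ls Cs : Om -> R) : Prop :=
  forall (B : set X) (a : A) (E F : set R),
    measurable B -> measurable E -> measurable F ->
    P (sample_event Xs As Ls Cs B [set a] E F)
    = (\int[px]_(x in B) ((pi0 x a)%:E * PLC x a (E `*` F)))%E.

End Defs.

(* Main.v *)
Require Import Defs.
From HB Require Import structures.
From mathcomp Require Import all_boot all_order all_algebra.
From mathcomp Require Import all_classical all_reals all_analysis.
From mathcomp Require Import measurable_realfun.
From mathcomp Require Import ring lra.
Import Order.TTheory GRing.Theory Num.Theory.
Import numFieldNormedType.Exports.
Local Open Scope classical_set_scope.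
Local Open Scope ring_scope.


Section helper0.
Set Implicit Arguments. Unset Strict Implicit.
Import HBNNSimple.
Local Open Scope ereal_scope.

Lemma dens_ge0 (R : realType) d (Om : measurableType d) (P : {measure set Om -> \bar R})
  dX (X : measurableType dX) (px : {measure set X -> \bar R}) (Xf : Om -> X)
  (mX : measurable_fun setT Xf) (S : set Om) (mS : measurable S) (rho : X -> R)
  (rho0 : forall x, (0 <= rho x)%R) (mrho : measurable_fun setT rho)
  (H : forall B, measurable B -> P (S `&` Xf @^-1` B) = \int[px]_(x in B) (rho x)%:E)
  (f : X -> \bar R) (f0 : forall x, 0 <= f x) (mf : measurable_fun setT f) :
  \int[P]_(w in S) f (Xf w) = \int[px]_x (f x * (rho x)%:E).
Proof.
pose h := nnsfun_approx measurableT mf.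
have mhX n : measurable_fun S (fun w => ((h n) (Xf w) : R)%:E).
  apply/measurable_EFinP; apply: measurable_funTS.
  by apply: measurableT_comp => //; exact: measurable_funP.
have -> : \int[P]_(w in S) f (Xf w) =
    lim (\int[P]_(w in S) ((h n) (Xf w))%:E @[n --> \oo]).
  have fE w : f (Xf w) = lim ((EFin \o h n) (Xf w) @[n --> \oo]).
    by apply/esym/cvg_lim => //; exact: cvg_nnsfun_approx.
  under eq_integral => w _ do rewrite fE.
  apply: monotone_convergence => //.
  - by move=> n w Sw //=; rewrite lee_fin.
  - by move=> w Sw a b ab; rewrite lee_fin; exact/lefP/nd_nnsfun_approx.
have -> : \int[px]_x (f x * (rho x)%:E) =
    lim (\int[px]_x (((h n) x)%:E * (rho x)%:E) @[n --> \oo]).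
  have fg x : f x * (rho x)%:E = lim (((h n) x)%:E * (rho x)%:E @[n --> \oo]).
    by apply/esym/cvg_lim => //; apply: cvgeZr => //; exact: cvg_nnsfun_approx.
  under eq_integral => x _ do rewrite fg.
  apply: monotone_convergence => [//| | |].
  - move=> n; apply/emeasurable_funM; apply/measurable_EFinP; last exact: mrho.
    exact: measurable_funP.
  - by move=> n x _ /=; rewrite mule_ge0 ?lee_fin.
  - by move=> x _ a b ab/=; rewrite lee_wpmul2r ?lee_fin//; exact/lefP/nd_nnsfun_approx.
suff suf n : \int[P]_(w in S) ((h n) (Xf w))%:E =
    \int[px]_x (((h n) x)%:E * (rho x)%:E).
  by under eq_fun do rewrite suf.
transitivity (\int[P]_(w in S)
   (\sum_(y \in range (h n)) (y * \1_(Xf @^-1` (h n @^-1` [set y])) w)%:E)).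
  by apply: eq_integral => w _; rewrite fimfunE -fsumEFin.
have mpre y : measurable (Xf @^-1` (h n @^-1` [set y])).
  by rewrite -[X in measurable X]setTI; apply: mX => //.
rewrite ge0_integral_fsum//; last 2 first.
  - by move=> y; apply/measurable_EFinP; apply: measurable_funM => //.
  - by move=> y w _; rewrite EFinM; exact: (nnfun_muleindic_ge0 (h n) y (Xf w)).
transitivity (\int[px]_x (\sum_(y \in range (h n))
    (y * \1_(h n @^-1` [set y]) x)%:E * (rho x)%:E)); last first.
  apply: eq_integral => x _.
  rewrite -ge0_mule_fsuml => [|y]; last exact: nnfun_muleindic_ge0.
  by rewrite fsumEFin // -(fimfunE _ x).
rewrite ge0_integral_fsum//; last 2 first.
  - move=> y; apply: emeasurable_funM => //; apply/measurable_EFinP => //.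
    exact/measurable_funM/measurable_indic.
  - by move=> m y _; apply: mule_ge0; [rewrite EFinM nnfun_muleindic_ge0 | rewrite lee_fin].
apply: eq_fsbigr => r rhn.
rewrite (integralZl_indic mS (fun k => Xf @^-1` (h n @^-1` [set k])))//; last first.
  move=> r0; apply/seteqP; split=> // w /= hw.
  by move: r0; rewrite -hw ltNge fun_ge0.
under [RHS]eq_integral do rewrite EFinM -muleA.
rewrite ge0_integralZl//; last 3 first.
- by apply: emeasurable_funM; apply/measurable_EFinP => //; try exact: measurable_indic.
- by move=> t _; rewrite mule_ge0 ?lee_fin.
- by move: rhn; rewrite inE => -[t _ <-]; rewrite lee_fin.
congr (_ * _).
rewrite integral_indic// setIC H//.
rewrite integral_mkcond; apply: eq_integral => x _.
by rewrite patchE /= indicE; case: (_ \in _); rewrite ?mul1e ?mul0e.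
Qed.

End helper0.
Unset Implicit Arguments. Set Strict Implicit.

Section helper1.
Set Implicit Arguments. Unset Strict Implicit.
Local Open Scope ereal_scope.

Lemma dens_int (R : realType) d (Om : measurableType d) (P : {measure set Om -> \bar R})
  dX (X : measurableType dX) (px : {measure set X -> \bar R}) (Xf : Om -> X)
  (mX : measurable_fun setT Xf) (S : set Om) (mS : measurable S) (rho : X -> R)
  (rho0 : forall x, (0 <= rho x)%R) (mrho : measurable_fun setT rho)
  (H : forall B, measurable B -> P (S `&` Xf @^-1` B) = \int[px]_(x in B) (rho x)%:E)
  (psi : X -> R) (mpsi : measurable_fun setT psi)
  (ipsi : P.-integrable S (fun w => (psi (Xf w))%:E)) :
  px.-integrable setT (fun x => (psi x * rho x)%:E) /\
  \int[P]_(w in S) (psi (Xf w))%:E = \int[px]_x (psi x * rho x)%:E.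
Proof.
have mpsiE : measurable_fun setT (EFin \o psi) by exact/measurable_EFinP.
have mpr : measurable_fun setT (fun x => (psi x * rho x)%:E).
  by apply/measurable_EFinP; exact: measurable_funM.
split.
  apply/integrableP; split => //.
  have := dens_ge0 mX mS rho0 mrho H (f := abse \o (EFin \o psi)) (fun x => abse_ge0 _)
    (measurableT_comp (@abse_measurable R setT) mpsiE).
  move=> E2.
  under eq_integral => x _ do rewrite EFinM abseM (gee0_abs (x := (rho x)%:E)) ?lee_fin//.
  rewrite -E2.
  by case/integrableP: ipsi.
have posE x : (fun x => (psi x * rho x)%:E)^\+ x = (EFin \o psi)^\+ x * (rho x)%:E.
  by rewrite !funeposE /= maxe_pMl ?lee_fin// mul0e EFinM.
have negE x : (fun x => (psi x * rho x)%:E)^\- x = (EFin \o psi)^\- x * (rho x)%:E.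
  by rewrite !funenegE /= maxe_pMl ?lee_fin// mul0e -EFinM mulNr.
rewrite integralE [RHS]integralE.
under [in RHS]eq_integral do rewrite posE.
under [X in _ = _ - X]eq_integral do rewrite negE.
rewrite -(dens_ge0 mX mS rho0 mrho H (f := (EFin \o psi)^\+) (funepos_ge0 _)
    (measurable_funepos mpsiE)).
rewrite -(dens_ge0 mX mS rho0 mrho H (f := (EFin \o psi)^\-) (funeneg_ge0 _)
    (measurable_funeneg mpsiE)).
by congr (_ - _); apply: eq_integral => w _; rewrite ?funeposE ?funenegE.
Qed.

End helper1.
Unset Implicit Arguments. Set Strict Implicit.

Section helper2.
Set Implicit Arguments. Unset Strict Implicit.

Lemma mpre_gt (R : realType) d (Om : measurableType d) (f : Om -> R) (t : R) :
  measurable_fun setT f -> measurable [set w | t < f w].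
Proof.
move=> mf; have := mf measurableT [set l | t < l].
rewrite setTI; apply; rewrite -set_itvoy; exact: measurable_itv.
Qed.

Lemma mgt (R : realType) (t : R) : measurable [set l : R | t < l].
Proof. rewrite -set_itvoy; exact: measurable_itv. Qed.

Lemma dens_facts (R : realType) dX (X : measurableType dX) (A : finType)
  (px : probability X R) (pi0 : X -> A -> R)
  (PLC : X -> A -> probability (R * R)%type R) (t : R)
  d (Om : measurableType d) (P : probability Om R)
  (Xf : Om -> X) (Af : Om -> A) (Lf Cf : Om -> R)
  (pi0_ge0 : forall x a, 0 <= pi0 x a)
  (mpi0 : forall a, measurable_fun [set: X] (fun x => pi0 x a))
  (mPLC : forall a (E : set (R * R)), measurable E ->
     measurable_fun [set: X] (fun x => (PLC x a E : \bar R)))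
  (indep : forall x a E F, measurable E -> measurable F ->
     PLC x a (E `*` F) = (PLC x a (E `*` [set: R]) * PLC x a ([set: R] `*` F))%E)
  (mX : measurable_fun [set: Om] Xf) (mA : forall a, measurable [set w | Af w = a])
  (mL : measurable_fun [set: Om] Lf) (mC : measurable_fun [set: Om] Cf)
  (law : sample_law P px pi0 PLC Xf Af Lf Cf) (a : A) :
  let K := [set w | t < Num.min (Lf w) (Cf w)] in
  let rho1 := fun x => pi0 x a * (surv PLC x a t * cens PLC t x a) in
  (forall B, measurable B ->
     P (([set w | Af w = a] `&` K) `&` Xf @^-1` B) = (\int[px]_(x in B) (rho1 x)%:E)%E) /\
  (forall B, measurable B ->
     P (([set w | Af w = a] `\` K) `&` Xf @^-1` B) = (\int[px]_(x in B) (pi0 x a - rho1 x)%:E)%E).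
Proof.
move=> K rho1.
have mK : measurable K.
  have -> : K = [set w | t < Lf w] `&` [set w | t < Cf w].
    by apply/seteqP; split => w; rewrite /K /= lt_min => /andP.
  by apply: measurableI; apply: mpre_gt.
have finP x (E : set (R * R)) : measurable E -> (PLC x a E)%E \is a fin_num.
  by move=> mE; apply: fin_num_measure.
have H1 B : measurable B ->
    P (([set w | Af w = a] `&` K) `&` Xf @^-1` B) = (\int[px]_(x in B) (rho1 x)%:E)%E.
  move=> mB.
  have -> : ([set w | Af w = a] `&` K) `&` Xf @^-1` B =
      sample_event Xf Af Lf Cf B [set a] [set l | t < l] [set c | t < c].
    apply/seteqP; split => w /=.
      move=> [[hA hK] hB]; split => //; split => //.
      by move: hK; rewrite /K /= lt_min => /andP.
    by move=> [hB [hA [h1 h2]]]; split => //; split => //; rewrite /K /= lt_min h1 h2.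
  rewrite law//; try exact: mgt.
  apply: eq_integral => x _.
  rewrite indep; try exact: mgt.
  rewrite /rho1 /surv /cens !EFinM !fineK //; apply: finP; apply: measurableX => //; exact: mgt.
split => // B mB.
have mXB : measurable (Xf @^-1` B) by rewrite -[X in measurable X]setTI; exact: mX.
have mQ : measurable ([set w | Af w = a] `&` Xf @^-1` B) by apply: measurableI.
have HQ := measureDI P mQ mK.
have -> : ([set w | Af w = a] `\` K) `&` Xf @^-1` B =
    ([set w | Af w = a] `&` Xf @^-1` B) `\` K.
  by apply/seteqP; split => w [[h1 h2] h3].
have E1 : P (([set w | Af w = a] `&` Xf @^-1` B) `&` K) = (\int[px]_(x in B) (rho1 x)%:E)%E.
  by rewrite -H1//; congr (P _); apply/seteqP; split => w [[h1 h2] h3].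
have E0 : P ([set w | Af w = a] `&` Xf @^-1` B) = (\int[px]_(x in B) (pi0 x a)%:E)%E.
  have -> : [set w | Af w = a] `&` Xf @^-1` B =
      sample_event Xf Af Lf Cf B [set a] [set: R] [set: R].
    apply/seteqP; split => w /=; first by move=> [h1 h2].
    by move=> [h1 [h2 _]].
  rewrite law//; apply: eq_integral => x _.
  by rewrite setXTT probability_setT mule1.
have mrho1 : measurable_fun setT rho1.
  apply: measurable_funM => //; apply: measurable_funM.
    apply: (measurableT_comp (@fine_measurable R setT measurableT)); apply: mPLC; apply: measurableX => //; exact: mgt.
  apply: (measurableT_comp (@fine_measurable R setT measurableT)); apply: mPLC; apply: measurableX => //; exact: mgt.
have rho1_ge0 x : 0 <= rho1 x.
  by rewrite /rho1 mulr_ge0// mulr_ge0// fine_ge0// measure_ge0.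
have rho1_le x : rho1 x <= pi0 x a.
  rewrite /rho1 -[leRHS]mulr1 ler_wpM2l// mulr_ile1 ?fine_ge0 ?measure_ge0//.
    rewrite -lee_fin fineK ?probability_le1//; try apply: finP;
      apply: measurableX => //; exact: mgt.
  rewrite -lee_fin fineK ?probability_le1//; try apply: finP;
    apply: measurableX => //; exact: mgt.
have : (\int[px]_(x in B) (pi0 x a)%:E =
    \int[px]_(x in B) (pi0 x a - rho1 x)%:E + \int[px]_(x in B) (rho1 x)%:E)%E.
  rewrite -ge0_integralD//.
  - by apply: eq_integral => x _; rewrite -EFinD subrK.
  - by move=> x _; rewrite lee_fin subr_ge0.
  - apply/measurable_EFinP; apply: measurable_funTS; apply: measurable_funB => //.
  - by move=> x _; rewrite lee_fin.
  - by apply/measurable_EFinP; apply: measurable_funTS.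
rewrite -E0 -E1 HQ => h.
have hf : P (([set w | Af w = a] `&` Xf @^-1` B) `&` K) \is a fin_num.
  by apply: fin_num_measure; apply: measurableI.
by have := congr1 (fun z => (z - P (([set w | Af w = a] `&` Xf @^-1` B) `&` K))%E) h; rewrite /= !addeK.
Qed.

End helper2.
Unset Implicit Arguments. Set Strict Implicit.

Section helper3.
Set Implicit Arguments. Unset Strict Implicit.

Lemma core (R : realType) dX (X : measurableType dX) (A : finType)
  (px : probability X R) (pi0 : X -> A -> R)
  (PLC : X -> A -> probability (R * R)%type R) (t : R)
  d (Om : measurableType d) (P : probability Om R)
  (Xf : Om -> X) (Af : Om -> A) (Lf Cf : Om -> R)
  (pi0_ge0 : forall x a, 0 <= pi0 x a)
  (mpi0 : forall a, measurable_fun [set: X] (fun x => pi0 x a))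
  (mPLC : forall a (E : set (R * R)), measurable E ->
     measurable_fun [set: X] (fun x => (PLC x a E : \bar R)))
  (indep : forall x a E F, measurable E -> measurable F ->
     PLC x a (E `*` F) = (PLC x a (E `*` [set: R]) * PLC x a ([set: R] `*` F))%E)
  (mX : measurable_fun [set: Om] Xf) (mA : forall a, measurable [set w | Af w = a])
  (mL : measurable_fun [set: Om] Lf) (mC : measurable_fun [set: Om] Cf)
  (law : sample_law P px pi0 PLC Xf Af Lf Cf)
  (F : X -> A -> R -> R)
  (hF : forall x a T, F x a T = if t < T then F x a (t + 1) else F x a t)
  (mF : forall a T, measurable_fun setT (fun x => F x a T))
  (iF : P.-integrable setT (fun w => (F (Xf w) (Af w) (Num.min (Lf w) (Cf w)))%:E)) :
  (\int[P]_w (F (Xf w) (Af w) (Num.min (Lf w) (Cf w)))%:E =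
   \int[px]_x (\sum_(a : A) (F x a (t + 1) * (pi0 x a * (surv PLC x a t * cens PLC t x a))
        + F x a t * (pi0 x a - pi0 x a * (surv PLC x a t * cens PLC t x a))))%:E)%E.
Proof.
set g := fun w => (F (Xf w) (Af w) (Num.min (Lf w) (Cf w)))%:E.
set K := [set w | t < Num.min (Lf w) (Cf w)].
set rho1 := fun a x => pi0 x a * (surv PLC x a t * cens PLC t x a).
have mK : measurable K.
  have -> : K = [set w | t < Lf w] `&` [set w | t < Cf w].
    by apply/seteqP; split => w; rewrite /K /= lt_min => /andP.
  by apply: measurableI; apply: mpre_gt.
have mD1 a : measurable ([set w | Af w = a] `&` K) by apply: measurableI.
have mD2 a : measurable ([set w | Af w = a] `\` K) by apply: measurableD.
have mrho1 a : measurable_fun setT (rho1 a).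
  apply: measurable_funM => //; apply: measurable_funM.
    apply: (measurableT_comp (@fine_measurable R setT measurableT)); apply: mPLC.
    by apply: measurableX => //; exact: mgt.
  apply: (measurableT_comp (@fine_measurable R setT measurableT)); apply: mPLC.
  by apply: measurableX => //; exact: mgt.
have fin1 x a (E : set (R * R)) : measurable E -> (PLC x a E <= 1)%E /\ (PLC x a E)%E \is a fin_num.
  by move=> mE; split; [exact: probability_le1 | exact: fin_num_measure].
have rho1_ge0 a x : 0 <= rho1 a x.
  by rewrite /rho1 mulr_ge0// mulr_ge0// fine_ge0// measure_ge0.
have rho1_le a x : rho1 a x <= pi0 x a.
  rewrite /rho1 -[leRHS]mulr1 ler_wpM2l// mulr_ile1 ?fine_ge0 ?measure_ge0//.
    have [h1 h2] := fin1 x a ([set l | t < l] `*` [set: R]) (measurableX (mgt t) measurableT).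
    by rewrite -lee_fin fineK.
  have [h1 h2] := fin1 x a ([set: R] `*` [set l | t < l]) (measurableX measurableT (mgt t)).
  by rewrite -lee_fin fineK.
have rho0_ge0 a x : 0 <= pi0 x a - rho1 a x by rewrite subr_ge0.
have mrho0 a : measurable_fun setT (fun x => pi0 x a - rho1 a x).
  by apply: measurable_funB.
have iD S : measurable S -> P.-integrable S g.
  by move=> mS; apply: integrableS iF.
have gE w : g w = (\sum_(a : A) ((g \_ ([set w | Af w = a] `&` K)) w
                          + (g \_ ([set w | Af w = a] `\` K)) w))%E.
  rewrite (bigD1 (Af w)) //= big1 ?adde0; last first.
    move=> a /negbTE neq; rewrite !patchE.
    rewrite !ifF; first by rewrite adde0.
      by apply/negbTE/negP; rewrite in_setE /= => -[h _]; move: neq; rewrite h eqxx.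
    by apply/negbTE/negP; rewrite in_setE /= => -[h _]; move: neq; rewrite h eqxx.
  rewrite !patchE.
  have m1 : (w \in [set w0 | Af w0 = Af w] `&` K) = (w \in K).
    apply/idP/idP; first by rewrite !in_setE /= => -[].
    by rewrite !in_setE /= => hK.
  have m2 : (w \in [set w0 | Af w0 = Af w] `\` K) = (w \notin K).
    apply/idP/idP; first by rewrite in_setE /= => -[_ hK]; apply/negP; rewrite in_setE.
    by move=> /negP hK; rewrite in_setE /=; split => //; move=> hK'; apply: hK; rewrite in_setE.
  rewrite m1 m2; case: (w \in K) => /=; [exact: esym (adde0 _) | exact: esym (add0e _)].
rewrite {1}(funext gE).
rewrite integral_sum//; last first.
  move=> a; apply: integrableD => //.
    by apply/(integrable_mkcond _ (mD1 a)); exact: iD.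
  by apply/(integrable_mkcond _ (mD2 a)); exact: iD.
have key a : (\int[P]_x ((g \_ ([set w | Af w = a] `&` K)) x +
         (g \_ ([set w | Af w = a] `\` K)) x) =
   \int[px]_x ((F x a (t + 1) * rho1 a x)%:E + (F x a t * (pi0 x a - rho1 a x))%:E))%E /\
   (px.-integrable setT (fun x => ((F x a (t + 1) * rho1 a x)%:E + (F x a t * (pi0 x a - rho1 a x))%:E)%E)).
  rewrite integralD//; last 2 first.
    by apply/(integrable_mkcond _ (mD1 a)); exact: iD.
    by apply/(integrable_mkcond _ (mD2 a)); exact: iD.
  rewrite -!integral_mkcond.
  have [dens1 dens0] := dens_facts t pi0_ge0 mpi0 mPLC indep mX mA mL mC law a.
  have e1 : (\int[P]_(w in [set w | Af w = a] `&` K) g w =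
      \int[P]_(w in [set w | Af w = a] `&` K) (F (Xf w) a (t + 1))%:E)%E.
    apply: eq_integral => w; rewrite in_setE => -[/= hA hK].
    by rewrite /g hA hF ifT.
  have e0 : (\int[P]_(w in [set w | Af w = a] `\` K) g w =
      \int[P]_(w in [set w | Af w = a] `\` K) (F (Xf w) a t)%:E)%E.
    apply: eq_integral => w; rewrite in_setE => -[/= hA hK].
    by rewrite /g hA hF ifF//; apply/negbTE/negP.
  have i1 : P.-integrable ([set w | Af w = a] `&` K) (fun w => (F (Xf w) a (t + 1))%:E).
    apply: (eq_integrable (mD1 a) g _ _ (iD _ (mD1 a))) => w; rewrite in_setE => -[/= hA hK].
    by rewrite /g hA hF ifT.
  have i0 : P.-integrable ([set w | Af w = a] `\` K) (fun w => (F (Xf w) a t)%:E).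
    apply: (eq_integrable (mD2 a) g _ _ (iD _ (mD2 a))) => w; rewrite in_setE => -[/= hA hK].
    by rewrite /g hA hF ifF//; apply/negbTE/negP.
  rewrite e1 e0.
  have [j1 ->] := dens_int mX (mD1 a) (rho1_ge0 a) (mrho1 a) dens1 (mF a (t + 1)) i1.
  have [j0 ->] := dens_int mX (mD2 a) (rho0_ge0 a) (mrho0 a) dens0 (mF a t) i0.
  by split; [rewrite -integralD | apply: integrableD].
rewrite (eq_bigr _ (fun a _ => (key a).1)) -integral_sum//; last by move=> a; exact: (key a).2.
apply: eq_integral => x _.
by rewrite -sumEFin; apply: eq_bigr => a _; rewrite EFinD.
Qed.

End helper3.
Unset Implicit Arguments. Set Strict Implicit.

Section helper4.
Set Implicit Arguments. Unset Strict Implicit.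

Lemma avg (R : realType) dX (X : measurableType dX) (A : finType)
  (px : probability X R) (pi0 : X -> A -> R)
  (PLC : X -> A -> probability (R * R)%type R) (t : R)
  d (Om : measurableType d) (P : probability Om R) (n : nat)
  (Xs : 'I_n -> Om -> X) (As : 'I_n -> Om -> A) (Ls Cs : 'I_n -> Om -> R)
  (n0 : (0 < n)%N)
  (pi0_ge0 : forall x a, 0 <= pi0 x a)
  (mpi0 : forall a, measurable_fun [set: X] (fun x => pi0 x a))
  (mPLC : forall a (E : set (R * R)), measurable E ->
     measurable_fun [set: X] (fun x => (PLC x a E : \bar R)))
  (indep : forall x a E F, measurable E -> measurable F ->
     PLC x a (E `*` F) = (PLC x a (E `*` [set: R]) * PLC x a ([set: R] `*` F))%E)
  (mX : forall i, measurable_fun [set: Om] (Xs i))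
  (mA : forall i a, measurable [set w | As i w = a])
  (mL : forall i, measurable_fun [set: Om] (Ls i))
  (mC : forall i, measurable_fun [set: Om] (Cs i))
  (law : forall i, sample_law P px pi0 PLC (Xs i) (As i) (Ls i) (Cs i))
  (F : X -> A -> R -> R)
  (hF : forall x a T, F x a T = if t < T then F x a (t + 1) else F x a t)
  (mF : forall a T, measurable_fun setT (fun x => F x a T))
  (iF : forall i, P.-integrable setT
     (fun w => (F (Xs i w) (As i w) (Num.min (Ls i w) (Cs i w)))%:E))
  (G : X -> R) (iG : px.-integrable setT (fun x => (G x)%:E))
  (hG : forall x, \sum_(a : A) (F x a (t + 1) * (pi0 x a * (surv PLC x a t * cens PLC t x a))
        + F x a t * (pi0 x a - pi0 x a * (surv PLC x a t * cens PLC t x a))) = G x) :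
  (\int[P]_w ((n%:R)^-1 * \sum_(i < n)
      F (Xs i w) (As i w) (Num.min (Ls i w) (Cs i w)))%:E =
   \int[px]_x (G x)%:E)%E.
Proof.
have each i : (\int[P]_w (F (Xs i w) (As i w) (Num.min (Ls i w) (Cs i w)))%:E =
    \int[px]_x (G x)%:E)%E.
  rewrite (core pi0_ge0 mpi0 mPLC indep (mX i) (mA i) (mL i) (mC i) (law i) hF mF (iF i)).
  by apply: eq_integral => x _; rewrite hG.
have eS w : ((\sum_(i < n) F (Xs i w) (As i w) (Num.min (Ls i w) (Cs i w)))%:E =
    \sum_(i < n) (F (Xs i w) (As i w) (Num.min (Ls i w) (Cs i w)))%:E)%E.
  by rewrite sumEFin.
under eq_integral do rewrite EFinM eS.
rewrite integralZl//; last by apply: (integrable_sum measurableT) => i _; exact: iF.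
rewrite (integral_sum measurableT (fun i => iF i)).
under eq_bigr do rewrite each.
have gfin : (\int[px]_x (G x)%:E)%E \is a fin_num by exact: integrable_fin_num.
rewrite -(fineK gfin) sumr_const card_ord.
set g := fine _.
have -> : (g%:E *+ n = (g *+ n)%:E) by rewrite EFin_natmul.
rewrite -EFinM.
congr (_%:E); rewrite -(mulr_natl g n) mulKf //.
by rewrite pnatr_eq0 -lt0n.
Qed.

End helper4.
Unset Implicit Arguments. Set Strict Implicit.

Section helper5.

Lemma minv (R : realType) : measurable_fun setT (@GRing.inv R).
Proof.
rewrite -(setvU [set (0:R)]) measurable_funU//; last by apply: measurableC.
split; last exact: measurable_fun_set1.
apply: open_continuous_measurable_fun.
  apply: closed_openC; apply: accessible_closed_set1; apply: hausdorff_accessible; exact: Rhausdorff.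
move=> x; rewrite inE /= => x0; apply: inv_continuous; exact/eqP.
Qed.

End helper5.
Unset Implicit Arguments. Set Strict Implicit.


Lemma alg_ips (R : realFieldType) (p q G S l dl : R) :
  p = 0 \/ (q != 0 /\ G != 0) ->
  p / q * (1 / G - l) * dl * (q * (S * G)) + p / q * (0 / G - l) * dl * (q - q * (S * G))
  = p * (S - l) * dl.
Proof.
case=> [->|[q0 G0]]; first by ring.
by field; apply/andP.
Qed.

Lemma alg_dr (R : realFieldType) (p q q0 G S Sh dl W : R) :
  p = 0 \/ G != 0 ->
  (p / q * (1 / G - Sh) * dl + W) * (q0 * (S * G)) +
  (p / q * (0 / G - Sh) * dl + W) * (q0 - q0 * (S * G))
  = p / q * q0 * (S - Sh) * dl + W * q0.
Proof.
case=> [->|G0]; first by ring.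
by move: (p / q) => r; field.
Qed.

Theorem mainTheorem5
  (R : realType) (dX : measure_display) (X : measurableType dX) (A : finType)
  (m : nat)
  (* context distribution, logging policy, joint law of (L, C) given (x, a) *)
  (px : probability X R) (pi0 : X -> A -> R)
  (PLC : X -> A -> probability (R * R)%type R)
  (* parametric policy, parameter, cost, models, time, multiplier *)
  (pol : 'rV[R]_m -> X -> A -> R) (th : 'rV[R]_m) (c : X -> A -> R)
  (pi0h : X -> A -> R) (Gh : R -> X -> A -> R) (Sh : X -> A -> R -> R)
  (t lam : R)
  (* the logged data *)
  (d : measure_display) (Om : measurableType d) (P : probability Om R) (n : nat)
  (Xs : 'I_n -> Om -> X) (As : 'I_n -> Om -> A) (Ls Cs : 'I_n -> Om -> R) :
  (* basic assumptions *)
  0 <= t -> 0 <= lam -> (0 < n)%N ->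
  (forall x a, 0 <= pi0 x a) -> (forall x, \sum_(a : A) pi0 x a = 1) ->
  (forall a, measurable_fun [set: X] (fun x => pi0 x a)) ->
  (forall th' x a, 0 <= pol th' x a) -> (forall th' x, \sum_(a : A) pol th' x a = 1) ->
  (forall x a, differentiable (fun th' => pol th' x a) th) ->
  (forall x a, 0 < pol th x a -> 0 < pi0 x a) ->
  (forall x a, PLC x a ([set l | 0 <= l] `*` [set c | 0 <= c]) = 1%E) ->
  (forall a (E : set (R * R)), measurable E ->
     measurable_fun [set: X] (fun x => (PLC x a E : \bar R))) ->
  (* conditional independence of L and C given (x, a) *)
  (forall x a E F, measurable E -> measurable F ->
     PLC x a (E `*` F) = (PLC x a (E `*` [set: R]) * PLC x a ([set: R] `*` F))%E) ->
  (* measurability of the (fixed) models, cost, and score function *)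
  (forall a, measurable_fun [set: X] (fun x => pol th x a)) ->
  (forall a, measurable_fun [set: X] (fun x => pi0h x a)) ->
  (forall a, measurable_fun [set: X] (fun x => Gh t x a)) ->
  (forall a, measurable_fun [set: X] (fun x => Sh x a t)) ->
  (forall a, measurable_fun [set: X] (fun x => c x a)) ->
  (forall a j, measurable_fun [set: X] (fun x => dlogpi pol th x a j)) ->
  (forall x a, 0 < pol th x a -> 0 < Gh t x a /\ 0 < pi0h x a) ->
  (* data generation: i.i.d. draws from p(x) pi_0(a|x) p(L,C|x,a) *)
  (forall i, measurable_fun [set: Om] (Xs i)) ->
  (forall i a, measurable [set w | As i w = a]) ->
  (forall i, measurable_fun [set: Om] (Ls i)) ->
  (forall i, measurable_fun [set: Om] (Cs i)) ->
  (forall i, sample_law P px pi0 PLC (Xs i) (As i) (Ls i) (Cs i)) ->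
  samples_indep P Xs As Ls Cs ->
  (* integrability (regularity) assumptions *)
  (forall i j, P.-integrable [set: Om] (fun w =>
      (ips_term pol pi0h Gh c lam t th j (Xs i w) (As i w)
         (Num.min (Ls i w) (Cs i w)))%:E)) ->
  (forall i j, P.-integrable [set: Om] (fun w =>
      (dr_term pol pi0h Gh Sh c lam t th j (Xs i w) (As i w)
         (Num.min (Ls i w) (Cs i w)))%:E)) ->
  (forall j, px.-integrable [set: X] (fun x =>
      (\sum_(a : A) pol th x a * (surv PLC x a t - lam * c x a)
                      * dlogpi pol th x a j)%:E)) ->
  (* correct censoring model *)
  (forall x a, Gh t x a = cens PLC t x a) ->
  (* conclusions *)
  ((forall x a, pi0h x a = pi0 x a) ->
     forall j : 'I_m,
       (\int[P]_w ((n%:R)^-1 * \sum_(i < n)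
           ips_term pol pi0h Gh c lam t th j (Xs i w) (As i w)
             (Num.min (Ls i w) (Cs i w)))%:E)%E
       = lag_grad px PLC pol c lam t th j)
  /\
  ((forall x a, pi0h x a = pi0 x a) \/ (forall x a, Sh x a t = surv PLC x a t) ->
     forall j : 'I_m,
       (\int[P]_w ((n%:R)^-1 * \sum_(i < n)
           dr_term pol pi0h Gh Sh c lam t th j (Xs i w) (As i w)
             (Num.min (Ls i w) (Cs i w)))%:E)%E
       = lag_grad px PLC pol c lam t th j).
Proof.
move=> t0 lam0 n0 pi0_ge0 pi0_sum mpi0 pol_ge0 pol_sum pol_diff supp PLC_supp mPLC indep
  mpol mpi0h mGh mSh mc mdl pos mXs mAs mLs mCs law indepS iips idr ilag hG.
have tt1 : t < t + 1 by rewrite ltrDl.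
have mfr a : measurable_fun setT (fun x => pol th x a / pi0h x a).
  apply: measurable_funM => //.
  exact: (measurableT_comp (@minv R) (mpi0h a)).
have mGi a : measurable_fun setT (fun x => (Gh t x a)^-1).
  exact: (measurableT_comp (@minv R) (mGh a)).
have pcase x a : pol th x a = 0 \/ 0 < pol th x a.
  by have := pol_ge0 th x a; rewrite le_eqVlt => /orP[/eqP <-|]; [left|right].
split.
  move=> hpi j; rewrite /lag_grad.
  apply: (avg (t := t) n0 pi0_ge0 mpi0 mPLC indep mXs mAs mLs mCs law
    (F := fun x a T => ips_term pol pi0h Gh c lam t th j x a T)).
  - by move=> x a T /=; rewrite /ips_term tt1 ltxx; case: ifP.
  - move=> a T; rewrite /ips_term.
    apply: measurable_funM => //; apply: measurable_funM => //.
    apply: measurable_funB; last by apply: measurable_funM.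
    by apply: measurable_funM.
  - by move=> i; exact: iips.
  - exact: ilag.
  move=> x; apply: eq_bigr => a _; rewrite /ips_term tt1 ltxx hG.
  rewrite hpi; apply: alg_ips.
  case: (pcase x a) => [->|pp]; [by left | right].
  have [g1 q1] := pos x a pp; split.
    by apply: lt0r_neq0; exact: supp.
  by rewrite -hG; apply: lt0r_neq0.
move=> hyp j; rewrite /lag_grad.
apply: (avg (t := t) n0 pi0_ge0 mpi0 mPLC indep mXs mAs mLs mCs law
  (F := fun x a T => dr_term pol pi0h Gh Sh c lam t th j x a T)).
- by move=> x a T /=; rewrite /dr_term tt1 ltxx; case: ifP.
- move=> a T; rewrite /dr_term.
  apply: measurable_funD.
    apply: measurable_funM => //; apply: measurable_funM => //.
    apply: measurable_funB => //.
    by apply: measurable_funM.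
  apply: measurable_sum => b.
  apply: measurable_funM => //; apply: measurable_funM => //.
  apply: measurable_funB => //.
  by apply: measurable_funM.
- by move=> i; exact: idr.
- exact: ilag.
move=> x.
set W := \sum_(b : A) pol th x b * (Sh x b t - lam * c x b) * dlogpi pol th x b j.
rewrite /dr_term -/W.
under eq_bigr => a _.
  rewrite tt1 ltxx hG alg_dr; last first.
    case: (pcase x a) => [->|pp]; [by left | right].
    by have [g1 _] := pos x a pp; rewrite -hG; apply: lt0r_neq0.
  over.
rewrite big_split /= -mulr_sumr pi0_sum mulr1.
case: hyp => [hpi|hS].
  rewrite /W -big_split /=; apply: eq_bigr => a _.
  case: (pcase x a) => [->|pp]; first by rewrite !mul0r; ring.
  rewrite hpi divfK; last by apply: lt0r_neq0; exact: supp.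
  ring.
rewrite big1 ?add0r; last by move=> a _; rewrite hS subrr mulr0 mul0r.
by rewrite /W; apply: eq_bigr => b _; rewrite hS.
Qed.
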